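(* Two weights $\lambda=(\lambda^L,\lambda^R),\mu=(\mu^L,\mu^R)\in\Lambda_{r,s}$ are $\delta$-balanced if and only if $p\big(c(\lambda,1),\dots,c(\lambda,r+s)\big)=p\big(c(\mu,1),\dots,c(\mu,r+s)\big)$ for every $p\in S_{r,s}[x;y]$.
   Context: $r,s\ge0$, $\delta\in\mathbb C$. $\Lambda^t_{r,s}$: pairs of partitions $(\lambda^L,\lambda^R)$ with $|\lambda^L|=r-t$, $|\lambda^R|=s-t$; $\Lambda_{r,s}=\bigsqcup_{t=0}^{\min(r,s)}\Lambda^t_{r,s}$. $[\nu]$ is the Young diagram of $\nu$; the content of the box in row $a$, column $b$ is $b-a$. $\mathrm{cont}(\nu,i)$ is the content of the box containing $i$ in the row-reading standard tableau of shape $\nu$. For $\lambda\in\Lambda^t_{r,s}$: $c(\lambda,i)=\mathrm{cont}(\lambda^L,i)$ ($1\le i\le r-t$), $0$ ($r-t<i\le r+t$), $\mathrm{cont}(\lambda^R,i-r-t)+\delta$ ($r+t<i\le r+s$). $\lambda,\mu$ are $\delta$-balanced if there is a pairing of the boxes of $[\lambda^L]\setminus([\lambda^L]\cap[\mu^L])$ with those of $[\lambda^R]\setminus([\lambda^R]\cap[\mu^R])$, and a pairing of the boxes of $[\mu^L]\setminus([\lambda^L]\cap[\mu^L])$ with those of $[\mu^R]\setminus([\lambda^R]\cap[\mu^R])$, such that the contents in each pair sum to $-\delta$. $S_{r,s}[x;y]$ is the algebra of polynomials in $x_1,\dots,x_r,y_1,\dots,y_s$ symmetric in the $x$'s and separately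 in the $y$'s such that $x_r=-y_1=t$ yields a polynomial independent of $t$; evaluation at $(a_1,\dots,a_{r+s})$ sets $x_i=a_i$, $y_j=a_{r+j}$. *)

(* Defs.v *)
From HB Require Import structures.
From mathcomp Require Import all_boot all_order all_algebra all_fingroup.
Unset Printing Implicit Defensive.
Import Order.TTheory GRing.Theory Num.Theory.
Local Open Scope ring_scope.

Definition is_partition (l : seq nat) : bool :=
  sorted geq l && all (fun x => 0 < x)%N l.

Definition psize (l : seq nat) : nat := sumn l.

(* Boxes (row, column), 0-indexed, of the Young diagram [nu], listed in
   row-reading order (row by row, left to right). *)
Definition boxes (nu : seq nat) : seq (nat * nat) :=
  flatten [seq [seq (i, j) | j <- iota 0 (nth 0%N nu i)] | i <- iota 0 (size nu)].

(* content of a box = column - row (invariant under the 0/1-index shift). *)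
Definition content (b : nat * nat) : int := (b.2%:Z - b.1%:Z)%R.

(* cont(nu, k): content of the box containing k (1 <= k <= |nu|) in the
   row-reading standard tableau of shape nu. *)
Definition cont (nu : seq nat) (k : nat) : int :=
  content (nth (0%N, 0%N) (boxes nu) k.-1).

Definition weight := (seq nat * seq nat)%type.

Definition in_Lambda (r s : nat) (la : weight) : Prop :=
  is_partition la.1 /\ is_partition la.2 /\
  exists t : nat, (t <= minn r s)%N /\ psize la.1 = (r - t)%N /\ psize la.2 = (s - t)%N.

(* The t such that lambda in Lambda^t_{r,s}. *)
Definition wt (r : nat) (la : weight) : nat := (r - psize la.1)%N.

Definition cw {F : nzRingType} (delta : F) (r s : nat) (la : weight) (i : nat) : F :=
  let t := wt r la in
  if (i <= r - t)%N then (cont la.1 i)%:~R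
  else if (i <= r + t)%N then 0
  else (cont la.2 (i - r - t))%:~R + delta.

Definition cvec {F : nzRingType} (delta : F) (r s : nat) (la : weight)
  (i : 'I_(r + s)) : F := cw delta r s la (val i).+1.

(* A pairing (bijection) between the boxes of A and of B such that the contents
   in each pair sum to -delta: a reordering B' of B matched elementwise with A. *)
Definition content_pairing {F : nzRingType} (delta : F)
  (A B : seq (nat * nat)) : Prop :=
  exists B' : seq (nat * nat), perm_eq B' B /\
    all2 (fun a b => (content a)%:~R + (content b)%:~R == - delta) A B'.

Definition boxdiff (X Y : seq nat) : seq (nat * nat) :=
  [seq b <- boxes X | b \notin boxes Y].

Definition balanced {F : nzRingType} (delta : F) (la mu : weight) : Prop :=
  content_pairing delta (boxdiff la.1 mu.1) (boxdiff la.2 mu.2) /\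
  content_pairing delta (boxdiff mu.1 la.1) (boxdiff mu.2 la.2).

(* Variables are indexed by 'I_(r+s): index i < r is x_(i+1),
   index r + j is y_(j+1).  A polynomial is a finite formal sum of terms
   (coefficient, exponent vector); its coefficients are read off by coefm,
   so two representations denote the same polynomial iff coefm agrees. *)

Definition mono (n : nat) := {ffun 'I_n -> nat}.
Definition mpoly (F : nzRingType) (n : nat) := seq (F * mono n).

Definition coefm {F : nzRingType} {n : nat} (p : mpoly F n) (m : mono n) : F :=
  \sum_(u <- p | u.2 == m) u.1.

Definition meval {F : nzRingType} {n : nat} (p : mpoly F n) (a : 'I_n -> F) : F :=
  \sum_(u <- p) u.1 * \prod_(i < n) a i ^+ u.2 i.

Definition sym_xy {F : nzRingType} (r s : nat) (p : mpoly F (r + s)) : Prop :=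
  forall sigma : 'S_(r + s), (forall i, (val (sigma i) < r)%N = (val i < r)%N) ->
  forall m : mono (r + s), coefm p [ffun i => m (sigma i)] = coefm p m.

Definition expo_at {n : nat} (k : nat) (m : mono n) : nat :=
  (\sum_(j < n | val j == k) m j)%N.

(* substitution x_r = t, y_1 = -t (for r, s > 0); the new variable t is put
   in the slot of x_r (index r-1), the slot of y_1 (index r) becomes unused:
   x_r^a y_1^b  |->  (-1)^b t^(a+b). *)
Definition subst_t {F : nzRingType} (r s : nat) (p : mpoly F (r + s)) : mpoly F (r + s) :=
  [seq ((-1) ^+ expo_at r u.2 * u.1,
        [ffun i : 'I_(r + s) => if val i == r.-1 then (u.2 i + expo_at r u.2)%N
                               else if val i == r then 0%N else u.2 i]) | u <- p].

Definition t_independent {F : nzRingType} (r s : nat) (p : mpoly F (r + s)) : Prop :=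
  forall m : mono (r + s), (0 < expo_at r.-1 m)%N -> coefm (@subst_t F r s p) m = 0.

Definition in_S {F : nzRingType} (r s : nat) (p : mpoly F (r + s)) : Prop :=
  @sym_xy F r s p /\ ((0 < r)%N -> (0 < s)%N -> @t_independent F r s p).

(* Main.v *)
Require Import Defs.
From HB Require Import structures.
From mathcomp Require Import all_boot all_order all_algebra all_fingroup.
From mathcomp Require Import ring zify.
Import Order.TTheory GRing.Theory Num.Theory.
Local Open Scope ring_scope.
Set Implicit Arguments. Unset Strict Implicit.

Section PolyPart.
Variable F : numClosedFieldType.

Definition mon {n} (a : 'I_n -> F) (m : mono n) : F := \prod_(i < n) a i ^+ m i.

Lemma meval_coef n (p : mpoly F n) (a : 'I_n -> F) (L : seq (mono n)) :
  uniq L -> {subset map snd p <= L} ->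
  meval p a = \sum_(m <- L) coefm p m * mon a m.
Proof.
move=> uL sub; rewrite /coefm.
rewrite (eq_bigr (fun m => \sum_(u <- p | u.2 == m) u.1 * mon a m)); last first.
  by move=> m _; rewrite big_distrl.
rewrite (exchange_big_dep xpredT) //= /meval.
apply: eq_big_seq => u up.
have uL2 : u.2 \in L by apply: sub; apply/mapP; exists u => //.
rewrite (big_rem u.2) // eqxx [X in _ = _ + X]big1_seq ?addr0 // => m /andP [/eqP em hm].
move: hm; rewrite -em (rem_filter u.2 uL).
by rewrite mem_filter /= eqxx.
Qed.

Lemma meval_eq_coef n (p q : mpoly F n) a :
  coefm p =1 coefm q -> meval p a = meval q a.
Proof.
move=> e; set L := undup (map snd p ++ map snd q).
have uL : uniq L by exact: undup_uniq.
rewrite (@meval_coef _ p a L uL) ?(@meval_coef _ q a L uL); last 2 first.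
- by move=> m h; rewrite mem_undup mem_cat h orbT.
- by move=> m h; rewrite mem_undup mem_cat h.
by apply: eq_bigr => m _; rewrite e.
Qed.

Lemma eq_meval n (p : mpoly F n) a b : a =1 b -> meval p a = meval p b.
Proof.
move=> e; apply: eq_bigr => u _; congr (_ * _); apply: eq_bigr => i _.
by rewrite e.
Qed.

Lemma meval_perm r s (p : mpoly F (r + s)) (sg : 'S_(r + s)) a :
  sym_xy r s p -> (forall i, (val (sg i) < r)%N = (val i < r)%N) ->
  meval p (fun i => a (sg i)) = meval p a.
Proof.
move=> sy bp.
pose q : mpoly F (r + s) :=
  map (fun u : F * mono (r + s) => (u.1, [ffun i => u.2 ((sg^-1)%g i)] : mono (r + s))) p.
have e1 : meval q a = meval p (fun i => a (sg i)).
  rewrite /meval big_map; apply: eq_bigr => u _ /=; congr (_ * _).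
  rewrite (reindex_inj (@perm_inj _ sg)); apply: eq_bigr => i _.
  by rewrite ffunE permK.
have e2 : coefm q =1 coefm p.
  move=> m; rewrite -(sy sg bp m) /coefm big_map /=.
  apply: eq_bigl => u /=; apply/eqP/eqP => [h|h].
    apply/ffunP => j; rewrite ffunE -h ffunE permK //.
  apply/ffunP => j; rewrite ffunE h ffunE permKV //.
by rewrite -e1; apply: meval_eq_coef.
Qed.

Lemma expo_at_val n k (m : mono n) (j0 : 'I_n) : val j0 = k -> expo_at k m = m j0.
Proof.
move=> h; rewrite /expo_at (big_pred1 j0) // => j /=.
by rewrite -h; apply/eqP/eqP => [e|->//]; apply: val_inj.
Qed.

Section Cancel.
Variables (r s : nat) (xr y1 : 'I_(r + s)).
Hypotheses (hx : val xr = r.-1) (hy : val y1 = r) (r0 : (0 < r)%N).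

Lemma y1_neq_xr : (y1 != xr).
Proof. by apply/eqP => /(congr1 val); rewrite hx hy; lia. Qed.

Lemma meval_subst (p : mpoly F (r + s)) c :
  meval (subst_t r s p) c = meval p (fun i => if i == y1 then - c xr else c i).
Proof.
rewrite /meval /subst_t big_map; apply: eq_bigr => u _ /=.
rewrite (expo_at_val u.2 hy).
rewrite (bigD1 xr) //= (bigD1 y1) /= ?y1_neq_xr //.
rewrite [in RHS](bigD1 xr) //= [in RHS](bigD1 y1) /= ?y1_neq_xr //.
rewrite !ffunE hx eqxx hy.
have -> : (r == r.-1) = false by apply/eqP; lia.
rewrite !eqxx.
have -> : (xr == y1) = false by apply/eqP => e; move: y1_neq_xr; rewrite e eqxx.
rewrite (eq_bigr (fun i => c i ^+ u.2 i)); last first.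
  move=> i /andP [ix iy]; rewrite ffunE.
  have -> : (val i == r.-1) = false.
    by apply: contraNF ix => /eqP e; apply/eqP; apply: val_inj; rewrite /= e hx.
  have -> // : (val i == r) = false.
  by apply: contraNF iy => /eqP e; apply/eqP; apply: val_inj; rewrite /= e hy.
rewrite [in RHS](eq_bigr (fun i => c i ^+ u.2 i)); last first.
  by move=> i /andP [ix iy]; rewrite (negbTE iy).
rewrite exprD expr0 [(- c xr) ^+ _]exprNn.
move: ((-1) ^+ u.2 y1) (c xr ^+ u.2 y1) (c xr ^+ u.2 xr) u.1 => A B C E.
move: (\prod_(i < r + s | _) _) => D; ring.
Qed.

Lemma meval_tind (p : mpoly F (r + s)) c :
  t_independent r s p ->
  meval (subst_t r s p) c = meval (subst_t r s p) (fun i => if i == xr then 0 else c i).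
Proof.
move=> ti; set q := subst_t r s p.
set L := undup (map snd q).
have uL : uniq L by exact: undup_uniq.
have sL : {subset map snd q <= L} by move=> m h; rewrite mem_undup.
rewrite (@meval_coef _ q c L uL sL) (@meval_coef _ q _ L uL sL).
apply: eq_bigr => m _.
have [m0|m0] := posnP (m xr).
  congr (_ * _); apply: eq_bigr => i _; case: eqP => [->|//].
  by rewrite m0 !expr0.
by rewrite ti ?mul0r // (expo_at_val m hx).
Qed.

Lemma cancel0 (p : mpoly F (r + s)) b :
  in_S r s p -> b y1 = - b xr ->
  meval p b = meval p (fun i => if (i == xr) || (i == y1) then 0 else b i).
Proof.
move=> [_ ti] hb.
have s0 : (0 < s)%N by have := ltn_ord y1; rewrite hy; lia.
have ti' := ti r0 s0.
rewrite (@eq_meval _ p b (fun i => if i == y1 then - b xr else b i)); last first.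
  by move=> i; case: eqP => [->|].
rewrite -meval_subst meval_tind // meval_subst.
apply: eq_meval => i; rewrite eqxx oppr0.
case: (i =P y1) => [->|_]; first by rewrite orbT.
by rewrite orbF.
Qed.

End Cancel.

Definition bpres r s (sg : 'S_(r + s)) := forall i, (val (sg i) < r)%N = (val i < r)%N.

Lemma tperm_bp r s (u v : 'I_(r + s)) :
  (val u < r)%N = (val v < r)%N -> bpres (tperm u v).
Proof. by move=> e i; case: tpermP => [->|->|]. Qed.

Lemma mul_bp r s (s1 s2 : 'S_(r + s)) : bpres s1 -> bpres s2 -> bpres (s1 * s2)%g.
Proof. by move=> h1 h2 i; rewrite permM h2 h1. Qed.

Lemma cancel_gen r s (p : mpoly F (r + s)) a (k1 k2 : 'I_(r + s)) :
  in_S r s p -> (val k1 < r)%N -> (r <= val k2)%N -> a k2 = - a k1 ->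
  meval p a = meval p (fun i => if (i == k1) || (i == k2) then 0 else a i).
Proof.
move=> pS h1 h2 hk; have h1n : (k1 < r)%N by []; have h2n : (r <= k2)%N by [].
have r0 : (0 < r)%N by lia.
have hxr : (r.-1 < r + s)%N by have := ltn_ord k2; lia.
have hy1 : (r < r + s)%N by have := ltn_ord k2; lia.
pose xr := Ordinal hxr; pose y1 := Ordinal hy1.
have nk2x : k2 != xr by apply/eqP => /(congr1 val) /= e; lia.
have ny1x : y1 != xr by apply/eqP => /(congr1 val) /= e; lia.
have nk12 : k1 != k2 by apply/eqP => /(congr1 val) /= e; lia.
have nxk2 : xr != k2 by rewrite eq_sym.
pose sg := (tperm k1 xr * tperm k2 y1)%g.
have bp : bpres sg.
  apply: mul_bp; apply: tperm_bp => /=.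
    by rewrite h1 ltn_predL r0.
  by rewrite ltnNge h2 ltnn.
have s1 : sg k1 = xr by rewrite permM tpermL (tpermD nk2x ny1x).
have s2 : sg k2 = y1 by rewrite permM (tpermD nk12 nxk2) tpermL.
pose b := fun i => a ((sg^-1)%g i).
rewrite (@eq_meval _ p a (fun i => b (sg i))); last by move=> i; rewrite /b permK.
rewrite (meval_perm b (proj1 pS) bp).
rewrite (@cancel0 r s xr y1 erefl erefl r0 p b pS); last by rewrite /b -s1 -s2 !permK.
rewrite -(meval_perm _ (proj1 pS) bp); apply: eq_meval => i.
by rewrite -s1 -s2 !(inj_eq perm_inj) /b permK.
Qed.

Lemma count_mk (T : eqType) n (f : 'I_n -> T) (P : pred T) :
  count P [tuple f i | i < n] = (\sum_(i < n) P (f i))%N.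
Proof. by rewrite -sum1_count /= big_map big_enum_cond /= big_mkcond. Qed.

Section Multi.
Variables r s : nat.
Implicit Types a b : 'I_(r + s) -> F.

Definition cx a v : nat := (\sum_(i < r) (a (lshift s i) == v))%N.
Definition cy a v : nat := (\sum_(j < s) ((- a (rshift r j))%R == v))%N.
Definition Deq a b := forall v, (cx a v + cy b v = cx b v + cy a v)%N.
Definition reduced a := forall i j, a (lshift s i) = - a (rshift r j) -> a (lshift s i) = 0.
Definition nz a : nat := (\sum_(k < r + s) (a k != 0%R))%N.
Definition zero2 a (k1 k2 : 'I_(r + s)) :=
  fun i => if (i == k1) || (i == k2) then 0 else a i.

Lemma Deq_refl a : Deq a a. Proof. by []. Qed.
Lemma Deq_sym a b : Deq a b -> Deq b a. Proof. by move=> h v; have := h v; lia. Qed.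
Lemma Deq_trans a b c : Deq a b -> Deq b c -> Deq a c.
Proof. by move=> h1 h2 v; have := h1 v; have := h2 v; lia. Qed.

Lemma lr_neq (i : 'I_r) (j : 'I_s) : (lshift s i == rshift r j) = false.
Proof. apply/eqP => /(congr1 val) /=; have := ltn_ord i; lia. Qed.

Lemma step_Deq a i j : a (rshift r j) = - a (lshift s i) ->
  Deq a (zero2 a (lshift s i) (rshift r j)).
Proof.
move=> h v; rewrite /cx /cy.
set z := zero2 a _ _.
have zx : forall i', i' != i -> z (lshift s i') = a (lshift s i').
  by move=> i' ni; rewrite /z /zero2 (inj_eq (@lshift_inj r s)) (negbTE ni) lr_neq.
have zy : forall j', j' != j -> z (rshift r j') = a (rshift r j').
  by move=> j' nj; rewrite /z /zero2 (inj_eq (@rshift_inj r s)) (negbTE nj) eq_sym lr_neq orbF.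
rewrite (bigD1 i) //= [X in (_ + X)%N](bigD1 j) //=.
rewrite [in RHS](bigD1 i) //= [in RHS](bigD1 j) //=.
have Sx : (\sum_(i' < r | i' != i) (z (lshift s i') == v) =
          \sum_(i' < r | i' != i) (a (lshift s i') == v))%N.
  by apply: eq_bigr => i' ni; rewrite zx.
have Sy : (\sum_(j' < s | j' != j) ((- z (rshift r j'))%R == v) =
          \sum_(j' < s | j' != j) ((- a (rshift r j'))%R == v))%N.
  by apply: eq_bigr => j' nj; rewrite zy.
rewrite Sx Sy.
rewrite /z /zero2 eqxx /= eqxx orbT oppr0 h opprK.
rewrite /=; ring.
Qed.

Lemma step_nz a k1 k2 : a k1 != 0 -> (nz (zero2 a k1 k2) < nz a)%N.
Proof.
move=> h; rewrite /nz (bigD1 k1) //= [X in (_ < X)%N](bigD1 k1) //= h /zero2 eqxx /= eqxx.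
rewrite add0n add1n ltnS; apply: leq_sum => k _.
by case: ifP => // _; rewrite eqxx.
Qed.

Variable p : mpoly F (r + s).
Hypothesis pS : in_S r s p.

Lemma reduce_ex a : exists a', meval p a = meval p a' /\ Deq a a' /\ reduced a'.
Proof.
move: {2}(nz a) (leqnn (nz a)) => n; elim: n a => [|n IH] a hn.
  exists a; split=> //; split; first exact: Deq_refl.
  move=> i j _; apply/eqP; apply: contraTT hn => h; rewrite -ltnNge.
  by rewrite /nz (bigD1 (lshift s i)) //= h.
case: (boolP [exists i, exists j, (a (rshift r j) == - a (lshift s i)) && (a (lshift s i) != 0)]).
  move=> /existsP [i /existsP [j /andP [/eqP hij hi0]]].
  have hlt : (nz (zero2 a (lshift s i) (rshift r j)) <= n)%N.
    by have := @step_nz a (lshift s i) (rshift r j) hi0; lia.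
  have [a' [e1 [d1 r1]]] := IH (zero2 a (lshift s i) (rshift r j)) hlt.
  exists a'; split; last split=> //.
    by rewrite -e1 /zero2; apply: cancel_gen => //=; exact: leq_addr.
  exact: Deq_trans (step_Deq hij) d1.
move=> hn2; exists a; split=> //; split; first exact: Deq_refl.
move=> i j h; apply/eqP; apply: contraNT hn2 => h0; apply/existsP; exists i.
by apply/existsP; exists j; rewrite h0 h opprK eqxx.
Qed.

End Multi.

Lemma perm_from_counts (T : eqType) (s1 s2 : seq T) :
  (forall x, count_mem x s1 = count_mem x s2) -> perm_eq s1 s2.
Proof. by move=> h; apply/allP => x _ /=; rewrite h. Qed.

Lemma zero_trick (s1 s2 : seq F) : size s1 = size s2 ->
  (forall v, v != 0 -> count_mem v s1 = count_mem v s2) -> perm_eq s1 s2.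
Proof.
move=> hs h.
have hf : perm_eq [seq x <- s1 | x != 0] [seq x <- s2 | x != 0].
  apply: perm_from_counts => x; rewrite !count_filter.
  have [->|nx] := eqVneq x 0.
    by rewrite !(@eq_count _ _ pred0) ?count_pred0 // => y /=; case: eqP => // ->.
  by rewrite !(@eq_count _ _ (pred1 x)) ?h // => y /=; case: eqP => // ->.
apply: perm_from_counts => x.
have [->|nx] := eqVneq x 0; last exact: h.
have c1 := count_predC (pred1 0) s1; have c2 := count_predC (pred1 0) s2.
have e : count (predC (pred1 0)) s1 = count (predC (pred1 0)) s2.
  by rewrite -!size_filter; apply: perm_size.
by apply/eqP; rewrite -(eqn_add2r (count (predC (pred1 0)) s1)) c1 e c2 hs.
Qed.

Section Multi2.
Variables r s : nat.
Implicit Types a b : 'I_(r + s) -> F.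

Lemma reduced_cx a v : reduced a -> v != 0 -> cx a v = 0%N \/ cy a v = 0%N.
Proof.
move=> ra nv.
case: (boolP [exists i, a (lshift s i) == v]) => [/existsP [i /eqP hi]|hx]; last first.
  left; apply: big1 => i _; apply/eqP; rewrite eqb0; apply: contra hx => h.
  by apply/existsP; exists i.
case: (boolP [exists j, - a (rshift r j) == v]) => [/existsP [j /eqP hj]|hy]; last first.
  right; apply: big1 => j _; apply/eqP; rewrite eqb0; apply: contra hy => h.
  by apply/existsP; exists j.
have h : a (lshift s i) = - a (rshift r j) by rewrite hi hj.
by move: nv; rewrite -hi (ra i j h) eqxx.
Qed.

Lemma cxy_eq a b v : reduced a -> reduced b -> Deq a b -> v != 0 ->
  cx a v = cx b v /\ cy a v = cy b v.
Proof.
move=> ra rb d nv; have := d v.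
have := reduced_cx ra nv; have := reduced_cx rb nv; lia.
Qed.

Definition xs a := [tuple a (lshift s i) | i < r].
Definition ys a := [tuple (- a (rshift r j))%R | j < s].

Lemma xs_perm a b : reduced a -> reduced b -> Deq a b -> perm_eq (xs b) (xs a).
Proof.
move=> ra rb d; apply: zero_trick; first by rewrite !size_tuple.
move=> v nv; rewrite /xs !count_mk.
by have [e _] := cxy_eq ra rb d nv; move: e; rewrite /cx => ->.
Qed.

Lemma ys_perm a b : reduced a -> reduced b -> Deq a b -> perm_eq (ys b) (ys a).
Proof.
move=> ra rb d; apply: zero_trick; first by rewrite !size_tuple.
move=> v nv; rewrite /ys !count_mk.
by have [_ e] := cxy_eq ra rb d nv; move: e; rewrite /cy => ->.
Qed.

End Multi2.

Lemma reduced_eval r s (p : mpoly F (r + s)) a b : in_S r s p ->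
  reduced a -> reduced b -> Deq a b -> meval p a = meval p b.
Proof.
move=> pS ra rb d.
have /tuple_permP [p1 e1] := xs_perm ra rb d.
have /tuple_permP [p2 e2] := ys_perm ra rb d.
have hx : forall i, b (lshift s i) = a (lshift s (p1 i)).
  move=> i; have := congr1 (nth 0 ^~ i) e1.
  by rewrite -[LHS](@tnth_nth _ _ 0 (xs b)) -(@tnth_nth _ _ 0) !tnth_mktuple.
have hy : forall j, b (rshift r j) = a (rshift r (p2 j)).
  move=> j; have := congr1 (nth 0 ^~ j) e2.
  rewrite -[LHS](@tnth_nth _ _ 0 (ys b)) -(@tnth_nth _ _ 0) !tnth_mktuple.
  exact: oppr_inj.
pose f (k : 'I_(r + s)) := match split k with
  | inl i => lshift s (p1 i) | inr j => rshift r (p2 j) end.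
have finj : injective f.
  move=> k k'; rewrite /f.
  case: (splitP k) => i ei; case: (splitP k') => i' ei' /(congr1 val) /= e.
  - apply: val_inj; rewrite /= ei ei'; congr (nat_of_ord _).
    by apply: (@perm_inj _ p1); apply: val_inj.
  - by have := ltn_ord (p1 i); lia.
  - by have := ltn_ord (p1 i'); lia.
  - apply: val_inj; rewrite /= ei ei'; congr (_ + nat_of_ord _)%N.
    by apply: (@perm_inj _ p2); apply: val_inj => /=; lia.
pose sg := perm finj.
have bp : bpres sg.
  move=> k; rewrite permE /f; case: (splitP k) => i ei /=.
    by rewrite ltn_ord.
  by rewrite ltnNge leq_addr.
have hb : forall k, b k = a (sg k).
  move=> k; rewrite permE /f; case: (splitP k) => i ei.
    by rewrite -hx; congr b; apply: val_inj.
  by rewrite -hy; congr b; apply: val_inj.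
by rewrite (eq_meval p hb) (meval_perm a (proj1 pS) bp).
Qed.

Lemma claimG r s (p : mpoly F (r + s)) a b : in_S r s p ->
  Deq a b -> meval p a = meval p b.
Proof.
move=> pS d.
have [a' [ea [da ra]]] := reduce_ex pS a.
have [b' [eb [db rb]]] := reduce_ex pS b.
rewrite ea eb; apply: reduced_eval => //.
exact: Deq_trans (Deq_sym da) (Deq_trans d db).
Qed.

Section PowerSums.
Variables r s : nat.

Definition wk (k : nat) (i : 'I_(r + s)) : F := if (val i < r)%N then 1 else - (-1) ^+ k.
Definition kd (k : nat) (i : 'I_(r + s)) : mono (r + s) := [ffun j => if j == i then k else 0%N].
Definition Pk (k : nat) : mpoly F (r + s) := [seq (wk k i, kd k i) | i <- enum 'I_(r + s)].

Definition PS (a : 'I_(r + s) -> F) k : F :=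
  \sum_(i < r) a (lshift s i) ^+ k - \sum_(j < s) (- a (rshift r j)) ^+ k.

Lemma Pk_eval k a : meval (Pk k) a = PS a k.
Proof.
rewrite /meval /Pk big_map big_enum /=.
rewrite (eq_bigr (fun i => wk k i * a i ^+ k)); last first.
  move=> i _; congr (_ * _); rewrite (bigD1 i) //= ffunE eqxx big1 ?mulr1 //.
  by move=> j nj; rewrite ffunE (negbTE nj) expr0.
rewrite big_split_ord /= /PS /wk.
rewrite (eq_bigr (fun i => a (lshift s i) ^+ k)); last first.
  by move=> i _; rewrite /= ltn_ord mul1r.
congr (_ + _); rewrite -sumrN; apply: eq_bigr => j _.
have -> : (val (rshift r j) < r)%N = false by rewrite /= ltnNge leq_addr.
by rewrite [(- a _) ^+ _]exprNn mulNr.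
Qed.

Lemma coefm_Pk k m : coefm (Pk k) m = \sum_(i < r + s) (if kd k i == m then wk k i else 0).
Proof. by rewrite /coefm /Pk big_map big_enum_cond /= big_mkcond. Qed.

Lemma Pk_sym k : sym_xy r s (Pk k).
Proof.
move=> sg bp m; rewrite !coefm_Pk [in RHS](reindex_inj (@perm_inj _ sg)) /=.
apply: eq_bigr => i _.
have -> : (kd k i == [ffun j => m (sg j)]) = (kd k (sg i) == m).
  apply/eqP/eqP => h; apply/ffunP => j.
    have := congr1 (fun f : mono (r + s) => f ((sg^-1)%g j)) h.
    by rewrite !ffunE permKV (canF_eq (permKV sg)).
  have := congr1 (fun f : mono (r + s) => f (sg j)) h.
  by rewrite !ffunE (inj_eq perm_inj).
by rewrite /wk bp.
Qed.


Lemma Pk_tind k : (0 < r)%N -> (0 < s)%N -> t_independent r s (Pk k).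
Proof.
move=> r0 s0 m hm.
have hxr : (r.-1 < r + s)%N by lia.
have hy1 : (r < r + s)%N by lia.
pose xr := Ordinal hxr; pose y1 := Ordinal hy1.
have ny1x : y1 != xr by apply/eqP => /(congr1 val) /= e; lia.
rewrite (expo_at_val m (erefl : val xr = r.-1)) in hm.
rewrite /coefm /subst_t /Pk -map_comp big_map big_enum_cond big_mkcond /=.
have ex : forall i, expo_at r (kd k i) = if y1 == i then k else 0%N.
  by move=> i; rewrite (expo_at_val _ (erefl : val y1 = r)) ffunE.
pose M := [ffun j : 'I_(r + s) => if val j == r.-1 then k else 0%N].
have kdv : forall i j, kd k i j = if j == i then k else 0%N by move=> i j; rewrite ffunE.
have eqv : forall (i j : 'I_(r + s)), (i == j) = (val i == val j) by [].
rewrite (bigD1 xr) //= (bigD1 y1) //= big1; last first.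
  move=> i /andP [ix iy]; case: eqP => // e; exfalso.
  have := congr1 (fun f : mono (r + s) => f xr) e; rewrite ffunE /= eqxx ex !kdv.
  rewrite (eq_sym y1) (negbTE iy) eq_sym (negbTE ix) => e0; move: hm; rewrite -e0; lia.
have Mx : [ffun i => if val i == r.-1 then (kd k xr i + expo_at r (kd k xr))%N
            else if val i == r then 0%N else kd k xr i] = M.
  apply/ffunP => j; rewrite !ffunE ex (negbTE ny1x) addn0 !eqv /=.
  by case: (_ == r.-1); case: (_ == r).
have My : [ffun i => if val i == r.-1 then (kd k y1 i + expo_at r (kd k y1))%N
            else if val i == r then 0%N else kd k y1 i] = M.
  apply/ffunP => j; rewrite !ffunE ex eqxx !eqv /=.
  case: eqP => [->|_]; first by have -> : (r.-1 == r) = false by apply/eqP; lia.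
  by case: eqP.
rewrite Mx My ex ex eqxx (negbTE ny1x) /wk /=.
have -> : (r.-1 < r)%N by lia.
have -> : (r < r)%N = false by rewrite ltnn.
case: (M == m); last by rewrite !addr0.
by rewrite expr0 mul1r mulrN -exprMn mulrNN mulr1 expr1n addr0 subrr.
Qed.

Lemma Pk_S k : in_S r s (Pk k).
Proof. by split; [exact: Pk_sym | exact: Pk_tind]. Qed.

End PowerSums.

Section QTrick.
Variables r s : nat.
Implicit Types a b : 'I_(r + s) -> F.

Definition Qv (q : {poly F}) a :=
  \sum_(i < r) q.[a (lshift s i)] - \sum_(j < s) q.[- a (rshift r j)].

Lemma Q_PS q a : Qv q a = \sum_(k < size q) q`_k * PS a k.
Proof.
rewrite /Qv /PS.
under eq_bigr => i _ do rewrite horner_coef.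
under [X in _ - X]eq_bigr => j _ do rewrite horner_coef.
rewrite exchange_big /= [X in _ - X]exchange_big /= -sumrB; apply: eq_bigr => k _.
by rewrite mulrBr !mulr_sumr.
Qed.

Lemma mem_xs a i : a (lshift s i) \in xs a.
Proof. by rewrite -(tnth_mktuple (fun i => a (lshift s i))) mem_tnth. Qed.
Lemma mem_ys a j : - a (rshift r j) \in ys a.
Proof. by rewrite -(tnth_mktuple (fun j => - a (rshift r j))) mem_tnth. Qed.

Lemma Deq_of_PS a b : (forall k, PS a k = PS b k) -> Deq a b.
Proof.
move=> h v.
pose V : seq F := xs a ++ ys a ++ xs b ++ ys b.
pose q := \prod_(w <- V | w != v) ('X - w%:P).
pose c := \prod_(w <- V | w != v) (v - w).
have c0 : c != 0.
  rewrite prodf_seq_neq0; apply/allP => w _; apply/implyP => nw.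
  by rewrite subr_eq0 eq_sym.
have hq : forall z, z \in V -> q.[z] = (z == v)%:R * c.
  move=> z zV; rewrite /q horner_prod.
  under eq_bigr => w _ do rewrite hornerXsubC.
  have [->|nz] := eqVneq z v; first by rewrite mul1r.
  by rewrite (big_rem z) //= nz subrr !mul0r.
have QE : forall d, d = a \/ d = b -> Qv q d = (cx d v)%:R * c - (cy d v)%:R * c.
  move=> d hd; rewrite /Qv /cx /cy !natr_sum !mulr_suml; congr (_ - _).
    apply: eq_bigr => i _; rewrite hq //.
    by case: hd => ->; rewrite !mem_cat mem_xs ?orbT.
  apply: eq_bigr => j _; rewrite hq //.
  by case: hd => ->; rewrite !mem_cat mem_ys ?orbT.
have e : Qv q a = Qv q b by rewrite !Q_PS; apply: eq_bigr => k _; rewrite h.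
rewrite (QE a) in e; last by left.
rewrite (QE b) in e; last by right.
rewrite -!mulrBl in e.
have e2 := mulIf c0 e.
apply/eqP; rewrite -(eqr_nat F) !natrD; apply/eqP.
by move/eqP: e2; rewrite subr_eq addrAC eq_sym subr_eq eq_sym => /eqP.
Qed.

End QTrick.

Lemma mem_boxes (nu : seq nat) (b : nat * nat) :
  (b \in boxes nu) = (b.1 < size nu)%N && (b.2 < nth 0%N nu b.1)%N.
Proof.
case: b => i j /=; apply/idP/idP.
  case/flattenP => row /mapP [i' hi' ->] /mapP [j' hj' [-> ->]].
  by move: hi' hj'; rewrite !mem_iota !add0n => /andP [_ ->] /andP [_ ->].
move=> /andP [hi hj]; apply/flattenP.
exists [seq (i, j0) | j0 <- iota 0 (nth 0%N nu i)].
  by apply/mapP; exists i => //; rewrite mem_iota.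
by apply/mapP; exists j => //; rewrite mem_iota.
Qed.

Lemma uniq_rows (s : seq nat) (f : nat -> nat) : uniq s ->
  uniq (flatten [seq [seq (i, j) | j <- iota 0 (f i)] | i <- s]).
Proof.
elim: s => [//|x s IH] /= /andP [xs us].
rewrite cat_uniq IH // andbT; apply/andP; split.
  by rewrite map_inj_uniq ?iota_uniq // => j1 j2 [].
apply/hasPn => b /flattenP [row /mapP [i hi ->] /mapP [j _ ->]].
apply/negP => /mapP [j' _ [e _]]; by move: xs; rewrite -e hi.
Qed.

Lemma uniq_boxes nu : uniq (boxes nu).
Proof. exact/uniq_rows/iota_uniq. Qed.

Lemma size_boxes nu : size (boxes nu) = psize nu.
Proof.
rewrite /boxes size_flatten /shape -map_comp.
rewrite (eq_map (g := nth 0%N nu)); last by move=> i /=; rewrite size_map size_iota.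
by rewrite -/(mkseq _ _) mkseq_nth.
Qed.

Lemma part_nth nu i i' : is_partition nu -> (i' <= i)%N -> (i < size nu)%N ->
  (nth 0%N nu i <= nth 0%N nu i')%N.
Proof.
case/andP => so _ hii hi.
have tr : transitive geq by move=> a b c /= h1 h2; apply: leq_trans h2 h1.
have rf : reflexive geq by move=> a /=.
have := @sorted_leq_nth _ geq tr rf 0%N nu so i' i.
by apply; rewrite ?inE //; lia.
Qed.

Lemma boxes_down nu i j i' j' : is_partition nu -> ((i, j) \in boxes nu) ->
  (i' <= i)%N -> (j' <= j)%N -> (i', j') \in boxes nu.
Proof.
move=> pn; rewrite !mem_boxes /= => /andP [hi hj] h1 h2.
have := part_nth pn h1 hi; lia.
Qed.

Lemma diag X Y b1 b2 : is_partition X -> is_partition Y ->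
  b1 \in boxdiff X Y -> b2 \in boxdiff Y X -> content b1 = content b2 -> False.
Proof.
move=> pX pY; rewrite !mem_filter => /andP [n1 i1] /andP [n2 i2].
move: b1 b2 n1 i1 n2 i2 => [a1 c1] [a2 c2] /= n1 i1 n2 i2.
rewrite /content /= => e.
have [h|h] := leqP a1 a2.
  have h2 : (c1 <= c2)%N by lia.
  by have := boxes_down pY i2 h h2; rewrite (negbTE n1).
have h2 : (c2 <= c1)%N by lia.
by have := boxes_down pX i1 (ltnW h) h2; rewrite (negbTE n2).
Qed.

Section Comb.
Variable delta : F.

Definition cF (b : nat * nat) : F := (content b)%:~R.
Definition Yc (b : nat * nat) : F := - ((content b)%:~R + delta).

Lemma sum_count (T : Type) (P : pred T) (l : seq T) : (\sum_(x <- l) (P x : nat))%N = count P l.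
Proof. by elim: l => [|x l IH]; rewrite ?big_nil ?big_cons ?IH. Qed.

Lemma wt_eq r s la : in_Lambda r s la ->
  [/\ (wt r la <= minn r s)%N, psize la.1 = (r - wt r la)%N & psize la.2 = (s - wt r la)%N].
Proof.
case=> _ [_ [t [ht [h1 h2]]]].
have -> : wt r la = t by rewrite /wt h1; lia.
by split.
Qed.

Lemma cx_cvec r s la v : in_Lambda r s la ->
  cx (cvec delta r s la) v =
  (count (fun b => cF b == v) (boxes la.1) + wt r la * (0%R == v))%N.
Proof.
move=> /wt_eq [ht h1 h2]; set t := wt r la in ht h1 h2 *.
rewrite /cx /cvec /=.
rewrite -(big_mkord xpredT (fun i => (cw delta r s la i.+1 == v) : nat)).
rewrite (@big_cat_nat _ _ _ (r - t)) //=; last by lia.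
congr (_ + _)%N.
  rewrite -sum_count (big_nth (0%N, 0%N)) size_boxes h1.
  apply: eq_big_nat => i /andP [_ hi].
  by rewrite /cw -/t ifT //; lia.
rewrite (eq_big_nat _ _ (F2 := fun=> (0 == v) : nat)); last first.
  move=> i /andP [hi1 hi2]; rewrite /cw -/t ifF; last by apply/negbTE; rewrite -ltnNge; lia.
  by rewrite ifT //; lia.
by rewrite sum_nat_const_nat; congr (_ * _)%N; lia.
Qed.

Lemma cy_cvec r s la v : in_Lambda r s la ->
  cy (cvec delta r s la) v =
  (wt r la * (0%R == v) + count (fun b => Yc b == v) (boxes la.2))%N.
Proof.
move=> /wt_eq [ht h1 h2]; set t := wt r la in ht h1 h2 *.
rewrite /cy /cvec /=.
rewrite -(big_mkord xpredT (fun j => ((- cw delta r s la (r + j).+1) == v) : nat)).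
rewrite (@big_cat_nat _ _ _ t) //=; last by lia.
congr (_ + _)%N.
  rewrite (eq_big_nat _ _ (F2 := fun=> (0 == v) : nat)); last first.
    move=> i /andP [hi1 hi2]; rewrite /cw -/t ifF; last by apply/negbTE; rewrite -ltnNge; lia.
    by rewrite ifT ?oppr0 //; lia.
  by rewrite sum_nat_const_nat; congr (_ * _)%N; lia.
rewrite -sum_count (big_nth (0%N, 0%N)) size_boxes h2.
rewrite -{1}(add0n t) big_addn.
apply: eq_big_nat => i /andP [_ hi].
rewrite /cw -/t ifF; last by apply/negbTE; rewrite -ltnNge; lia.
rewrite ifF; last by apply/negbTE; rewrite -ltnNge; lia.
rewrite /cont /Yc.
by have -> : ((r + (i + t)).+1 - r - t).-1 = i by lia.
Qed.


Lemma eq_pair a b : ((content a)%:~R + (content b)%:~R == - delta :> F) = (cF a == Yc b).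
Proof.
rewrite /cF /Yc; apply/eqP/eqP => h.
  by apply: (@addIr _ (content b)%:~R); rewrite h; ring.
by rewrite h; ring.
Qed.

Lemma all2_map (A B : seq (nat * nat)) :
  all2 (fun a b => cF a == Yc b) A B -> map cF A = map Yc B.
Proof.
elim: A B => [|a A IH] [|b B] //= /andP [/eqP h1 h2].
by rewrite h1 (IH B h2).
Qed.

Lemma pairing_counts A B : content_pairing delta A B <->
  (forall v, count (fun b => cF b == v) A = count (fun b => Yc b == v) B).
Proof.
split.
  case=> B' [pB al] v.
  have e : map cF A = map Yc B'.
    apply: all2_map; elim: A B' al {pB} => [|a A IH] [|b B'] //= /andP [h1 h2].
    by rewrite -eq_pair h1 IH.
  have := congr1 (count (pred1 v)) e; rewrite !count_map => ->.
  by move/seq.permP: pB => pB; apply: pB.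
move=> h.
have : perm_eq (map cF A) (map Yc B).
  by apply: perm_from_counts => v; rewrite !count_map; apply: h.
elim: A B {h} => [|a A IH] B /=.
  by rewrite perm_sym => /perm_nilP /eqP; rewrite -size_eq0 size_map size_eq0 => /eqP ->; exists [::].
move=> pe.
have : cF a \in map Yc B by rewrite -(perm_mem pe) mem_head.
case/mapP => b bB eb.
have pe2 : perm_eq (map cF A) (map Yc (rem b B)).
  rewrite -(perm_cons (cF a)); apply: (perm_trans pe).
  by rewrite eb -map_cons perm_map // perm_to_rem.
have [B' [pB' al]] := IH _ pe2.
exists (b :: B'); split.
  by rewrite perm_sym (perm_trans (perm_to_rem bB)) // perm_cons perm_sym.
by rewrite /= eq_pair eb eqxx.
Qed.

Lemma count_split (T : eqType) (P Q : pred T) (l : seq T) :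
  count P l = (count P (filter Q l) + count P (filter (predC Q) l))%N.
Proof. by elim: l => [|x l IH] //=; case: (Q x) => /=; rewrite IH; case: (P x) => /=; lia. Qed.

Lemma count_common (P : pred (nat * nat)) X Y :
  count P (boxes X) =
  (count P [seq b <- boxes Y | b \in boxes X] + count P (boxdiff X Y))%N.
Proof.
rewrite (count_split P (mem (boxes Y)) (boxes X)); congr (_ + _)%N.
apply/seq.permP; apply: uniq_perm; rewrite ?filter_uniq ?uniq_boxes //.
by move=> b; rewrite !mem_filter andbC.
Qed.

Lemma diag_count (g : int -> F) X Y v : injective g ->
  is_partition X -> is_partition Y ->
  count (fun b => g (content b) == v) (boxdiff X Y) = 0%N \/
  count (fun b => g (content b) == v) (boxdiff Y X) = 0%N.
Proof.
move=> gi pX pY.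
have [h1|h1] := eqVneq (count (fun b => g (content b) == v) (boxdiff X Y)) 0%N; first by left.
right; apply/eqP; rewrite -leqn0 leqNgt -has_count; apply/negP => /hasP [b2 hb2 /eqP e2].
move: h1; rewrite -lt0n -has_count => /hasP [b1 hb1 /eqP e1].
by apply: (diag pX pY hb1 hb2); apply: gi; rewrite e1 e2.
Qed.

Lemma count_common2 (P : pred (nat * nat)) X Y :
  count P (boxes X) =
  (count P [seq b <- boxes X | b \in boxes Y] + count P (boxdiff X Y))%N.
Proof. exact: count_split. Qed.

Lemma Yc_inj : injective (fun c : int => - ((c%:~R : F) + delta)).
Proof. by move=> c1 c2 /oppr_inj /addIr /intr_inj. Qed.

Lemma Deq_balanced r s la mu : in_Lambda r s la -> in_Lambda r s mu ->
  (Deq (cvec delta r s la) (cvec delta r s mu) <-> balanced delta la mu).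
Proof.
move=> hl hm.
have [pl1 [pl2 _]] := hl; have [pm1 [pm2 _]] := hm.
have key : forall v,
  let D1 := count (fun b => cF b == v) (boxdiff la.1 mu.1) in
  let D1' := count (fun b => cF b == v) (boxdiff mu.1 la.1) in
  let D2 := count (fun b => Yc b == v) (boxdiff la.2 mu.2) in
  let D2' := count (fun b => Yc b == v) (boxdiff mu.2 la.2) in
  [/\ (cx (cvec delta r s la) v + cy (cvec delta r s mu) v =
       cx (cvec delta r s mu) v + cy (cvec delta r s la) v)%N <-> (D1 + D2' = D1' + D2)%N,
      D1 = 0%N \/ D1' = 0%N & D2 = 0%N \/ D2' = 0%N].
  move=> v D1 D1' D2 D2'.
  split.
  - rewrite (cx_cvec _ hl) (cx_cvec _ hm) (cy_cvec _ hl) (cy_cvec _ hm).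
    rewrite (count_common _ la.1 mu.1) (count_common2 _ mu.1 la.1).
    rewrite (count_common _ la.2 mu.2) (count_common2 _ mu.2 la.2).
    rewrite -/D1 -/D1' -/D2 -/D2'. set C1 := count _ [seq b <- boxes mu.1 | _]. set C2 := count _ [seq b <- boxes mu.2 | _]. move: (wt r la * _)%N (wt r mu * _)%N => T1 T2; split => ?; lia.
  - exact: (@diag_count (fun c : int => c%:~R) la.1 mu.1 v (@intr_inj F) pl1 pm1).
  - exact: (@diag_count (fun c : int => - ((c%:~R : F) + delta)) la.2 mu.2 v Yc_inj pl2 pm2).
split.
  move=> d; split; apply/pairing_counts => v; have [k1 k2 k3] := key v;
    have := d v; rewrite k1; lia.
case=> /pairing_counts h1 /pairing_counts h2 v.
have [k1 _ _] := key v; rewrite k1.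
have := h1 v; have := h2 v; lia.
Qed.

End Comb.

End PolyPart.

Theorem mainTheorem15 (F : numClosedFieldType) (delta : F) (r s : nat)
  (la mu : weight) :
  in_Lambda r s la -> in_Lambda r s mu ->
  (balanced delta la mu <->
   forall p : mpoly F (r + s), in_S r s p ->
     meval p (cvec delta r s la) = meval p (cvec delta r s mu)).
Proof.
move=> hl hm; split.
  move=> hb p pS; apply: claimG pS _.
  exact: (proj2 (Deq_balanced delta hl hm) hb).
move=> h; apply/(Deq_balanced delta hl hm).
apply: Deq_of_PS => k; rewrite -!Pk_eval; apply: h; exact: Pk_S.
Qed.
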